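(* For $K>K^*:=\frac{b\sigma_1}{b-\mu_0}$ let $R(K)$ denote the $R$-component of the unique equilibrium $G_3(K)=(S^*,I_1^*,0,0,R^* )$ with positive $S^*,I_1^*,R^*$ (so $R(K)$ is the unique root in $(0,S^{**}-\sigma_1)$ of $f(R,K)=\big(S^{**}-\sigma_1-R+\frac{K}{b}(\mu_0-\mu_4')\big)R+\frac{\rho_1}{\alpha_1}(S^{**}-\sigma_1-R)=0$, where $S^{**}=\frac{K}{b}(b-\mu_0)$). Then $K\mapsto R(K)$ is differentiable on $(K^*,\infty)$ and $$0<K\frac{dR}{dK}<\sigma_1+R(K).$$
   Context: Consider, for $t\ge0$, the system $S'=\big(b(1-\tfrac{N}{K})-\alpha_1I_1-\alpha_2I_2-(\beta_1+\beta_2+\alpha_3)I_{12}-\mu_0\big)S$, $I_1'=\big(b(1-\tfrac{N}{K})+\alpha_1S-\eta_1I_{12}-\gamma_1I_2-\mu_1\big)I_1+\beta_1SI_{12}$, $I_2'=\big(b(1-\tfrac{N}{K})+\alpha_2S-\eta_2I_{12}-\gamma_2I_1-\mu_2\big)I_2+\beta_2SI_{12}$, $I_{12}'=\big(b(1-\tfrac{N}{K})+\alpha_3S+\eta_1I_1+\eta_2I_2-\mu_3\big)I_{12}+(\gamma_1+\gamma_2)I_1I_2$, $R'=\big(b(1-\tfrac{N}{K})-\mu_4'\big)R+\rho_1I_1+\rho_2I_2+\rho_3I_{12}$, where $N=S+I_1+I_2+I_{12}+R$. All parameters $b,K,\alpha_i,\beta_i,\gamma_i,\eta_i,\rho_i,\mu_0,\mu_i'$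 are positive and $\mu_i=\rho_i+\mu_i'$ for $i=1,2,3$; $K$ is regarded as a varying parameter, the others fixed. Standing assumptions: $b>\mu_0$, $b>\mu_i$ ($i=1,2,3$), $b>\mu_4'$, and $\mu_0<\mu_4'<\mu_j'$ for $j=1,2,3$. Set $\sigma_k=(\mu_k-\mu_0)/\alpha_k$ ($k=1,2,3$), assumed to satisfy $\sigma_1<\sigma_2<\sigma_3$. *)

(* Defs.v *)
From Stdlib Require Import Reals Lra.
From Coquelicot Require Import Coquelicot.
Open Scope R_scope.

Definition mu1 (rho1 mu1p : R) : R := rho1 + mu1p.

Definition sigma1 (alpha1 rho1 mu1p mu0 : R) : R :=
  (mu1 rho1 mu1p - mu0) / alpha1.

Definition Kstar (b alpha1 rho1 mu1p mu0 : R) : R :=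
  b * sigma1 alpha1 rho1 mu1p mu0 / (b - mu0).

Definition Sss (b mu0 K : R) : R := K / b * (b - mu0).

Definition fRK (b alpha1 rho1 mu1p mu0 mu4p : R) (r K : R) : R :=
  (Sss b mu0 K - sigma1 alpha1 rho1 mu1p mu0 - r + K / b * (mu0 - mu4p)) * r
  + rho1 / alpha1 * (Sss b mu0 K - sigma1 alpha1 rho1 mu1p mu0 - r).

(* Main.v *)
Require Import Defs.
From Stdlib Require Import Reals Lra.
From Coquelicot Require Import Coquelicot.
Open Scope R_scope.

Definition gg (c d s p K : R) : R :=
  (((c-d)*K - s - p) + sqrt((((c-d)*K - s - p))^2 + 4*p*(c*K - s)))/2.

Lemma root_eq (c d s p K r : R) : 0 < p -> 0 < c*K - s -> 0 < r ->
  (c*K - s - r - d*K)*r + p*(c*K - s - r) = 0 -> r = gg c d s p K.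
Proof.
intros hp hA hr hf. unfold gg.
set (B := (c-d)*K - s - p).
assert (hD : B^2 + 4*p*(c*K - s) = (2*r - B)^2) by (unfold B; nra).
assert (hpos : 0 < 2*r - B).
{ destruct (Rle_or_lt (2*r - B) 0) as [h|h]; [|exact h].
  exfalso. nra. }
rewrite hD. rewrite sqrt_pow2 by lra. lra.
Qed.

Lemma gg_derive (c d s p K : R) : 0 < p -> 0 < c*K - s ->
  is_derive (gg c d s p) K
   (((c-d)*gg c d s p K + p*c)/(2*gg c d s p K - ((c-d)*K - s - p))).
Proof.
intros hp hA. unfold gg.
assert (hDp : 0 < ((c-d)*K - s - p)^2 + 4*p*(c*K - s)).
{ assert (0 <= ((c-d)*K - s - p)^2) by apply pow2_ge_0. nra. }
assert (hS : 0 < sqrt (((c-d)*K - s - p)^2 + 4*p*(c*K - s))) by (apply sqrt_lt_R0; lra).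
auto_derive.
- lra.
- replace (((c - d) * K + - s + - p) * (((c - d) * K + - s + - p) * 1) + 4 * p * (c * K + - s)) with (((c-d)*K - s - p)^2 + 4*p*(c*K - s)) by ring.
  set (Q := sqrt (((c-d)*K - s - p)^2 + 4*p*(c*K - s))) in *.
  replace (2 * (((c - d) * K - s - p + Q) / 2) - ((c - d) * K - s - p)) with Q by field.
  field. lra.
Qed.

Lemma bounds (c d s p K r : R) : 0 < p -> 0 < d -> 0 < c - d -> 0 < s - p -> 0 < K ->
  0 < r -> r < c*K - s ->
  (c*K - s - r - d*K)*r + p*(c*K - s - r) = 0 ->
  0 < 2*r - ((c-d)*K - s - p) /\
  0 < K * (((c-d)*r + p*c)/(2*r - ((c-d)*K - s - p))) < s + r.
Proof.
intros hp hd hcd hsp hK hr hrA hf.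
assert (hS : 0 < 2*r - ((c-d)*K - s - p)) by nra.
split; [exact hS|].
assert (hc : 0 < c) by lra.
split.
- apply Rmult_lt_0_compat; [lra|]. apply Rdiv_lt_0_compat; nra.
- rewrite Rmult_div_assoc. apply Rlt_div_l; [lra|].
  assert (hid : ((s+r)*(2*r - ((c-d)*K - s - p)) - K*((c-d)*r + p*c))*(r+p) = d*K*p*(r+s)).
  { nra. }
  assert (0 < d*K*p*(r+s)).
  { apply Rmult_lt_0_compat; [|nra]. apply Rmult_lt_0_compat; nra. }
  nra.
Qed.

Theorem proposition4
  (b alpha1 rho1 mu0 mu1p mu4p : R)
  (hb : 0 < b) (ha1 : 0 < alpha1) (hr1 : 0 < rho1) (hmu0 : 0 < mu0)
  (hmu1p : 0 < mu1p) (hmu4p : 0 < mu4p)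
  (hbmu0 : mu0 < b) (hbmu1 : mu1 rho1 mu1p < b) (hbmu4 : mu4p < b)
  (h04 : mu0 < mu4p) (h41 : mu4p < mu1p)
  (RK : R -> R)
  (hRK : forall K, Kstar b alpha1 rho1 mu1p mu0 < K ->
           0 < RK K < Sss b mu0 K - sigma1 alpha1 rho1 mu1p mu0 /\
           fRK b alpha1 rho1 mu1p mu0 mu4p (RK K) K = 0) :
  forall K, Kstar b alpha1 rho1 mu1p mu0 < K ->
    ex_derive RK K /\
    0 < K * Derive RK K < sigma1 alpha1 rho1 mu1p mu0 + RK K.
Proof.
set (c := (b - mu0)/b). set (d := (mu4p - mu0)/b).
set (s := sigma1 alpha1 rho1 mu1p mu0). set (p := rho1/alpha1).
assert (hc : 0 < c) by (unfold c; apply Rdiv_lt_0_compat; lra).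
assert (hd : 0 < d) by (unfold d; apply Rdiv_lt_0_compat; lra).
assert (hcd : 0 < c - d).
{ unfold c, d. replace ((b-mu0)/b - (mu4p-mu0)/b) with ((b-mu4p)/b) by (field; lra).
  apply Rdiv_lt_0_compat; lra. }
assert (hp : 0 < p) by (unfold p; apply Rdiv_lt_0_compat; lra).
assert (hsp : 0 < s - p).
{ unfold s, p, sigma1, mu1. replace ((rho1 + mu1p - mu0) / alpha1 - rho1 / alpha1) with ((mu1p-mu0)/alpha1) by (field; lra).
  apply Rdiv_lt_0_compat; lra. }
assert (hKs : Kstar b alpha1 rho1 mu1p mu0 = s / c).
{ unfold Kstar, s, c. field. lra. }
assert (hSss : forall K, Sss b mu0 K = c*K).
{ intro K. unfold Sss, c. field. lra. }
assert (hf : forall r K, fRK b alpha1 rho1 mu1p mu0 mu4p r K =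
   (c*K - s - r - d*K)*r + p*(c*K - s - r)).
{ intros r K. unfold fRK. rewrite hSss. fold s. fold p. unfold d. field. lra. }
assert (hA : forall K, Kstar b alpha1 rho1 mu1p mu0 < K -> 0 < c*K - s).
{ intros K HK. rewrite hKs in HK. apply Rlt_div_l in HK; [|lra]. lra. }
assert (heq : forall K, Kstar b alpha1 rho1 mu1p mu0 < K -> gg c d s p K = RK K).
{ intros K HK. destruct (hRK K HK) as [[h1 h2] h3]. rewrite hf in h3.
  symmetry. apply root_eq; auto. }
intros K HK.
assert (hloc : locally K (fun t => gg c d s p t = RK t)).
{ apply filter_imp with (P := fun t => Kstar b alpha1 rho1 mu1p mu0 < t).
  - intros t Ht. apply heq; exact Ht.
  - apply (open_gt (Kstar b alpha1 rho1 mu1p mu0)). exact HK. }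
pose proof (gg_derive c d s p K hp (hA K HK)) as Hd.
pose proof (is_derive_ext_loc _ _ _ _ hloc Hd) as HdR.
split.
- eexists; exact HdR.
- rewrite (is_derive_unique _ _ _ HdR).
  rewrite <- (heq K HK).
  destruct (hRK K HK) as [[h1 h2] h3]. rewrite hf in h3. rewrite hSss in h2.
  rewrite <- (heq K HK) in h1, h2, h3.
  assert (hK : 0 < K).
  { rewrite hKs in HK. assert (0 < s / c) by (apply Rdiv_lt_0_compat; lra). lra. }
  destruct (bounds c d s p K (gg c d s p K)) as [_ Hb]; auto.
Qed.
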